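(* Let $G^*$ and $G^*_u$ be as in the context. For any $S\subseteq[12]$ and $I=\{4,8,12\}\cap S$, we have $\mathsf{MAIS}(G^*_S)<\alpha(G^*_{S,u})$ if and only if either $S=\{2,10,7\}\cup I$ or $S=\{3,6,11\}\cup I$.
   Context: Consider the three-receiver unicast index coding problem with 12 messages indexed by $[12]$, where receiver $u_i$ demands the messages indexed by $W_i$ and knows those indexed by $K_i$: $W_1=\{1,2,3,4\}$, $W_2=\{5,6,7,8\}$, $W_3=\{9,10,11,12\}$, $K_1=\{5,6,9,10\}$, $K_2=\{1,2,9,11\}$, $K_3=\{1,3,5,7\}$. $G^*$ is the directed graph on vertex set $[12]$ with a directed edge $(a,b)$ iff $b\in K_i$, where $i$ is the unique index with $a\in W_i$. $G^*_u$ is the undirected graph on $[12]$ in which $\{a,b\}$ is an edge iff both $(a,b)$ and $(b,a)$ are edges of $G^*$. For $S\subseteq[12]$, $G^*_S$ and $G^*_{S,u}$ are the subgraphs of $G^*$ and $G^*_u$ induced by $S$. $\mathsf{MAIS}(D)$ is the maximum number of vertices of an acyclic induced subgraph of a directed graph $D$, and $\alpha(H)$ is the independence number of an undirected graph $H$. *)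

(* Defs.v *)
From mathcomp Require Import all_boot.
Set Implicit Arguments. Unset Strict Implicit. Unset Printing Implicit Defensive.

(* Messages [12] = {1,...,12}; the vertex v : 'I_12 represents message v+1. *)
Definition msg (v : 'I_12) : nat := (val v).+1.

(* Demand sets W_i and side-information sets K_i, i = 1,2,3 *)
Definition W (i : nat) : seq nat :=
  match i with 1 => [:: 1;2;3;4] | 2 => [:: 5;6;7;8] | 3 => [:: 9;10;11;12] | _ => [::] end.
Definition K (i : nat) : seq nat :=
  match i with 1 => [:: 5;6;9;10] | 2 => [:: 1;2;9;11] | 3 => [:: 1;3;5;7] | _ => [::] end.

Definition recv (a : nat) : nat :=
  if a \in W 1 then 1 else if a \in W 2 then 2 else 3.

Definition Gstar : rel 'I_12 := fun a b => msg b \in K (recv (msg a)).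

Definition Gu : rel 'I_12 := fun a b => Gstar a b && Gstar b a.

Definition induced (e : rel 'I_12) (T : {set 'I_12}) : rel 'I_12 :=
  fun a b => [&& a \in T, b \in T & e a b].

Definition acyclic_in (e : rel 'I_12) (T : {set 'I_12}) : bool :=
  [forall x, forall y, induced e T x y ==> ~~ connect (induced e T) y x].

Definition independent (e : rel 'I_12) (T : {set 'I_12}) : bool :=
  [forall x in T, forall y in T, ~~ e x y].

(* MAIS(G^*_S): max size of T ⊆ S with G^*_T acyclic (induced subgraphs of G^*_S
   are exactly the G^*_T for T ⊆ S) *)
Definition MAIS (S : {set 'I_12}) : nat :=
  \max_(T : {set 'I_12} | (T \subset S) && acyclic_in Gstar T) #|T|.

Definition alpha (S : {set 'I_12}) : nat :=
  \max_(T : {set 'I_12} | (T \subset S) && independent Gu T) #|T|.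

Definition msgs (l : seq nat) : {set 'I_12} := [set v | msg v \in l].

(* Main.v *)
Require Import Defs.
From mathcomp Require Import all_boot.

Fixpoint allb n : seq (seq bool) :=
  if n is n'.+1 then [seq b :: l | b <- [:: true; false], l <- allb n'] else [:: [::]].

Definition Gnat (a b : nat) : bool := b.+1 \in K (recv a.+1).

Definition Cycl : seq (seq nat) := [:: [::1;5]; [::2;5]; [::1;6]; [::2;6]; [::1;9]; [::3;9]; [::5;9]; [::7;9]; [::1;10]; [::3;10]; [::2;7;10]; [::5;11]; [::3;6;11]; [::7;11]].
Definition MAr : seq (seq nat * seq nat) :=
  [:: ([::1;2;3;4;7;8;12], [:: 3; 3; 3; 3; 0; 0; 2; 2; 0; 0; 0; 1]);
      ([::3;4;5;6;7;8;12], [:: 0; 0; 2; 2; 3; 3; 3; 3; 0; 0; 0; 1]);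
      ([::4;5;6;7;8;10;12], [:: 0; 0; 0; 1; 3; 3; 3; 3; 0; 2; 0; 2]);
      ([::1;2;3;4;8;11;12], [:: 3; 3; 3; 3; 0; 0; 0; 1; 0; 0; 2; 2]);
      ([::2;4;8;9;10;11;12], [:: 0; 2; 0; 2; 0; 0; 0; 1; 3; 3; 3; 3]);
      ([::4;6;8;9;10;11;12], [:: 0; 0; 0; 1; 0; 2; 0; 2; 3; 3; 3; 3])].
Definition MAl := map fst MAr.
Definition MIl : seq (seq nat) := [:: [::1;2;3;4;7;8;12]; [::3;4;5;6;7;8;12]; [::2;4;7;8;10;12]; [::4;5;6;7;8;10;12]; [::1;2;3;4;8;11;12]; [::3;4;6;8;11;12]; [::2;4;8;9;10;11;12]; [::4;6;8;9;10;11;12]].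

Definition I12 := iota 0 12.
Definition mxl {T : Type} (F : T -> nat) (l : seq T) := foldr (fun a m => maxn (F a) m) 0 l.
Definition cnt (A : seq nat) (bs : seq bool) := count (fun k => (k.+1 \in A) && nth false bs k) I12.
Definition subA (bs : seq bool) (A : seq nat) := all (fun k => nth false bs k ==> (k.+1 \in A)) I12.
Definition rhsb (bs : seq bool) (l : seq nat) :=
  all (fun k => nth false bs k == ((k.+1 \in l) || ((k.+1 \in [:: 4; 8; 12]) && nth false bs k))) I12.
Definition indb (bs : seq bool) :=
  all (fun a => all (fun b => nth false bs a ==> nth false bs b ==> ~~ (Gnat a b && Gnat b a)) I12) I12.

Lemma final_check : all (fun bs =>
  (mxl (fun A => cnt A bs) MAl < mxl (fun M => cnt M bs) MIl) == (rhsb bs [:: 2; 10; 7] || rhsb bs [:: 3; 6; 11])) (allb 12).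
Proof. Time vm_compute. reflexivity. Qed.

Lemma cyc_check : all (fun bs => all (fun C => ~~ all (fun k => nth false bs k.-1) C) Cycl ==> has (subA bs) MAl) (allb 12).
Proof. Time vm_compute. reflexivity. Qed.

Lemma ind_check : all (fun bs => indb bs ==> has (subA bs) MIl) (allb 12).
Proof. Time vm_compute. reflexivity. Qed.

Lemma MA_rank : all (fun p => all (fun a => all (fun b => [&& a.+1 \in p.1, b.+1 \in p.1 & Gnat a b] ==> (nth 0 p.2 a < nth 0 p.2 b)) I12) I12) MAr.
Proof. Time vm_compute. reflexivity. Qed.

Lemma MI_ind : all (fun M => all (fun a => all (fun b => (a.+1 \in M) ==> (b.+1 \in M) ==> ~~ (Gnat a b && Gnat b a)) I12) I12) MIl.
Proof. Time vm_compute. reflexivity. Qed.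

Lemma mxlE {T : Type} (F : T -> nat) l : mxl F l = \max_(a <- l) F a.
Proof. by elim: l => [|a l IH]; rewrite ?big_nil ?big_cons //= IH. Qed.

Definition bits (T : {set 'I_12}) : seq bool := [seq i \in T | i <- enum 'I_12].

Lemma size_bits T : size (bits T) = 12.
Proof. by rewrite size_map size_enum_ord. Qed.

Lemma bitsE T (i : 'I_12) : nth false (bits T) i = (i \in T).
Proof. by rewrite (nth_map i) ?size_enum_ord ?ltn_ord // nth_ord_enum. Qed.

Lemma mem_allb l : l \in allb (size l).
Proof.
elim: l => [|b l IH] //.
apply/allpairsP; exists (b, l); split => //; by case: b.
Qed.

Lemma bits_allb T : bits T \in allb 12.
Proof. by have := mem_allb (bits T); rewrite size_bits. Qed.

Lemma memI12 (i : 'I_12) : (nat_of_ord i) \in I12.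
Proof. by rewrite /I12 mem_iota ltn_ord. Qed.

Lemma cntE A T : #|msgs A :&: T| = cnt A (bits T).
Proof.
rewrite cardE /enum_mem size_filter -enumT /cnt /I12 -val_enum_ord count_map.
by apply: eq_count => i; rewrite /= !inE bitsE.
Qed.

Lemma acyc_sub e (T T' : {set 'I_12}) : T \subset T' -> acyclic_in e T' -> acyclic_in e T.
Proof.
move=> sub H; apply/forallP => x; apply/forallP => y; apply/implyP => hxy.
have hxy' : induced e T' x y.
  by move: hxy; rewrite /induced => /and3P [hx hy he]; rewrite (subsetP sub _ hx) (subsetP sub _ hy).
move: (implyP (forallP (forallP H x) y) hxy'); apply: contra.
apply: connect_sub => a b hab; apply: connect1.
by move: hab; rewrite /induced => /and3P [hx hy he]; rewrite (subsetP sub _ hx) (subsetP sub _ hy).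
Qed.

Lemma indep_sub e (T T' : {set 'I_12}) : T \subset T' -> independent e T' -> independent e T.
Proof.
move=> sub /forallP H; apply/forallP => x; apply/implyP => hx; apply/forallP => y; apply/implyP => hy.
exact: (implyP (forallP (implyP (H x) (subsetP sub _ hx)) y) (subsetP sub _ hy)).
Qed.

Lemma rank_acyc (T : {set 'I_12}) (r : 'I_12 -> nat) :
  (forall x y, induced Gstar T x y -> r x < r y) -> acyclic_in Gstar T.
Proof.
move=> H; apply/forallP=> x; apply/forallP=> y; apply/implyP=> exy.
apply/negP => /connectP [p pp ex].
have le : r y <= r (last y p).
  elim: p y pp {ex exy} => [|z p IH] y //= /andP [e pp].
  exact: leq_trans (ltnW (H _ _ e)) (IH _ pp).
have := H _ _ exy; rewrite -ex in le.
by rewrite ltnNge le.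
Qed.

Lemma MA_acyc A : A \in MAl -> acyclic_in Gstar (msgs A).
Proof.
move/mapP => [p pin ->].
apply: (@rank_acyc _ (fun x => nth 0 p.2 x)) => x y /and3P [hx hy e].
rewrite !inE in hx hy.
have := allP MA_rank p pin.
move/allP/(_ x (memI12 x))/allP/(_ y (memI12 y))/implyP; apply.
by apply/and3P.
Qed.

Lemma MI_indep M : M \in MIl -> independent Gu (msgs M).
Proof.
move=> hM; apply/forallP => x; apply/implyP => hx; apply/forallP => y; apply/implyP => hy.
rewrite !inE in hx hy.
have := allP MI_ind M hM.
move/allP/(_ x (memI12 x))/allP/(_ y (memI12 y))/implyP/(_ hx)/implyP/(_ hy).
done.
Qed.

Lemma two_cyc (T : {set 'I_12}) (x y : 'I_12) : x \in T -> y \in T -> Gstar x y -> Gstar y x -> ~~ acyclic_in Gstar T.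
Proof.
move=> hx hy exy eyx; apply/negP => /forallP/(_ x)/forallP/(_ y)/implyP H.
have := H (introT and3P (And3 hx hy exy)).
by rewrite connect1 //; apply/and3P.
Qed.

Lemma three_cyc (T : {set 'I_12}) (x y z : 'I_12) : x \in T -> y \in T -> z \in T ->
  Gstar x y -> Gstar y z -> Gstar z x -> ~~ acyclic_in Gstar T.
Proof.
move=> hx hy hz exy eyz ezx; apply/negP => /forallP/(_ x)/forallP/(_ y)/implyP H.
have := H (introT and3P (And3 hx hy exy)).
rewrite (connect_trans (connect1 (_ : induced Gstar T y z)) (connect1 (_ : induced Gstar T z x))) //;
 by apply/and3P.
Qed.

Lemma bitsI (T : {set 'I_12}) (x : 'I_12) : nth false (bits T) x -> x \in T.
Proof. by rewrite bitsE. Qed.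

Ltac inT h := apply: bitsI; exact h.

Lemma cyc_nonacyc C (T : {set 'I_12}) : C \in Cycl -> all (fun k => nth false (bits T) k.-1) C -> ~~ acyclic_in Gstar T.
Proof.
suff: all (fun C => all (fun k => nth false (bits T) k.-1) C ==> ~~ acyclic_in Gstar T) Cycl.
  by move/allP => H hC /(implyP (H C hC)).
rewrite /Cycl /=.
repeat (apply/andP; split); try done; apply/implyP.
all: first
  [ move=> /andP [h1 /andP [h2 /andP [h3 _]]];
    match type of h1 with is_true (nth false _ ?a) =>
    match type of h2 with is_true (nth false _ ?b) =>
    match type of h3 with is_true (nth false _ ?c) =>
    have ha : a < 12 by []; have hb : b < 12 by []; have hc : c < 12 by [];
    first [ apply: (@three_cyc T (Ordinal ha) (Ordinal hb) (Ordinal hc)); [inT h1|inT h2|inT h3|by []|by []|by []]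
          | apply: (@three_cyc T (Ordinal ha) (Ordinal hc) (Ordinal hb)); [inT h1|inT h3|inT h2|by []|by []|by []] ]
    end end end
  | move=> /andP [h1 /andP [h2 _]];
    match type of h1 with is_true (nth false _ ?a) =>
    match type of h2 with is_true (nth false _ ?b) =>
    have ha : a < 12 by []; have hb : b < 12 by [];
    apply: (@two_cyc T (Ordinal ha) (Ordinal hb)); [inT h1|inT h2|by []|by []]
    end end ].
Qed.

Lemma acyc_cover (T : {set 'I_12}) : acyclic_in Gstar T -> exists2 A, A \in MAl & T \subset msgs A.
Proof.
move=> H.
have prem : all (fun C => ~~ all (fun k => nth false (bits T) k.-1) C) Cycl.
  apply/allP => C hC; apply/negP => hall.
  by move: (@cyc_nonacyc C T hC hall); rewrite H.
have /hasP [A hA hsub] := implyP (allP cyc_check _ (bits_allb T)) prem.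
exists A => //.
apply/subsetP => i hi; rewrite inE.
have := allP hsub i (memI12 i); rewrite bitsE hi.
done.
Qed.

Lemma ind_cover (T : {set 'I_12}) : independent Gu T -> exists2 M, M \in MIl & T \subset msgs M.
Proof.
move=> H.
have prem : indb (bits T).
  apply/allP => a ha; apply/allP => b hb; apply/implyP => na; apply/implyP => nb.
  have ha' : a < 12 by move: ha; rewrite /I12 mem_iota.
  have hb' : b < 12 by move: hb; rewrite /I12 mem_iota.
  move: na nb; rewrite -[a]/(nat_of_ord (Ordinal ha')) -[b]/(nat_of_ord (Ordinal hb')) !bitsE => na nb.
  exact: (implyP (forallP (implyP (forallP H _) na) _) nb).
have /hasP [M hM hsub] := implyP (allP ind_check _ (bits_allb T)) prem.
exists M => //.
apply/subsetP => i hi; rewrite inE.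
have := allP hsub i (memI12 i); rewrite bitsE hi.
done.
Qed.

Lemma MAIS_eq S : MAIS S = mxl (fun A => cnt A (bits S)) MAl.
Proof.
rewrite mxlE; apply/eqP; rewrite eqn_leq; apply/andP; split.
  apply/bigmax_leqP => T /andP [sub ac].
  have [A hA sA] := acyc_cover T ac.
  apply: (@leq_trans #|msgs A :&: S|).
    by apply: subset_leq_card; rewrite subsetI sA sub.
  by rewrite cntE; exact: (leq_bigmax_seq _ hA).
apply/bigmax_leqP_seq => A hA _.
rewrite -cntE; apply: leq_bigmax_cond.
by rewrite subsetIr /=; exact: (acyc_sub _ _ _ (subsetIl _ _) (MA_acyc A hA)).
Qed.

Lemma alpha_eq S : alpha S = mxl (fun A => cnt A (bits S)) MIl.
Proof.
rewrite mxlE; apply/eqP; rewrite eqn_leq; apply/andP; split.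
  apply/bigmax_leqP => T /andP [sub ac].
  have [A hA sA] := ind_cover T ac.
  apply: (@leq_trans #|msgs A :&: S|).
    by apply: subset_leq_card; rewrite subsetI sA sub.
  by rewrite cntE; exact: (leq_bigmax_seq _ hA).
apply/bigmax_leqP_seq => A hA _.
rewrite -cntE; apply: leq_bigmax_cond.
by rewrite subsetIr /=; exact: (indep_sub _ _ _ (subsetIl _ _) (MI_indep A hA)).
Qed.

Lemma rhsE (S : {set 'I_12}) l : S = msgs l :|: (msgs [:: 4; 8; 12] :&: S) <-> rhsb (bits S) l.
Proof.
split.
  move=> E; apply/allP => k hk.
  have hk' : k < 12 by move: hk; rewrite /I12 mem_iota.
  rewrite -[k]/(nat_of_ord (Ordinal hk')) bitsE.
  by rewrite {1}E !inE /msg.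
move=> /allP H; apply/setP => x.
have := H x (memI12 x); rewrite bitsE => /eqP h.
by rewrite {1}h !inE /msg.
Qed.

Theorem theorem4 (S : {set 'I_12}) :
  let I := msgs [:: 4; 8; 12] :&: S in
  (MAIS S < alpha S) <->
  (S = msgs [:: 2; 10; 7] :|: I \/ S = msgs [:: 3; 6; 11] :|: I).
Proof.
move=> I; rewrite /I MAIS_eq alpha_eq.
have /eqP -> := allP final_check _ (bits_allb S).
split.
  by case/orP => /rhsE h; [left | right].
by case => /rhsE h; apply/orP; [left | right].
Qed.
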